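(* Let $G$ be a graph with at least one isolated vertex such that $G\ne\widetilde G$, and let $T$ be a minimum twin cover of $G$. Then for every $t\ge1$, \[(t+1)|T|+t-1\le \det(\mu_t(G))\le \det(\widetilde G)+(t+1)|T|+t-1.\] Moreover, both bounds are sharp: each is attained (with equality) by some graph $G$ satisfying the hypotheses.
   Context: All graphs are finite and simple. For a graph $G$ with $V(G)=\{v_1,\dots,v_n\}$ and an integer $t\ge1$, the generalized Mycielskian $\mu_t(G)$ has vertex set $\{u_i^s: 1\le i\le n,\ 0\le s\le t\}\cup\{w\}$, where $u_i^0$ is identified with $v_i$. Its edges are: $u_i^0u_j^0$ for each edge $v_iv_j$ of $G$; $u_i^su_j^{s+1}$ and $u_j^su_i^{s+1}$ for each edge $v_iv_j$ of $G$ and each $0\le s<t$; and $u_i^tw$ for all $1\le i\le n$. A set $S\subseteq V(G)$ is a determining set for $G$ if the only automorphism of $G$ fixing every vertex of $S$ is the identity; $\det(G)$ is the minimum size of a determining set. Two vertices are twins if they have the same open neighborhood; being twins is an equivalence relation on $V(G)$, and the twin quotient $\widetilde G$ has the equivalence classes as vertices, with two classes adjacent iff some members are adjacent in $G$ ($G\ne\widetilde G$ means $G$ has a pair of distinct twins). A minimum twin cover is a minimum-size vertex subset containing at least one vertex from every pair of distinct twins. *)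

(* Defs.v *)
From mathcomp Require Import all_boot.
From mathcomp Require Import fingroup perm.
Set Implicit Arguments. Unset Strict Implicit. Unset Printing Implicit Defensive.

Definition simple_graph (V : finType) (e : rel V) : Prop :=
  symmetric e /\ irreflexive e.

Definition is_aut (V : finType) (e : rel V) (p : {perm V}) : bool :=
  [forall x, forall y, e (p x) (p y) == e x y].

Definition determining (V : finType) (e : rel V) (S : {set V}) : bool :=
  [forall p : {perm V}, is_aut e p ==> [forall x in S, p x == x] ==> (p == 1%g)].

(* det(G): minimum size of a determining set (setT is always determining,
   so the default #|V| does not affect the value). *)
Definition det (V : finType) (e : rel V) : nat :=
  \big[minn/#|V|]_(S : {set V} | determining e S) #|S|.

(* Generalized Mycielskian mu_t(G): vertices u_i^s = Some (v_i, s), s <= t,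
   and w = None. *)
Definition mycielskian (V : finType) (e : rel V) (t : nat)
  : rel (option (V * 'I_t.+1)) :=
  fun x y =>
    match x, y with
    | Some (i, s), Some (j, r) =>
        e i j && [|| ((s : nat) == 0) && ((r : nat) == 0),
                     (r : nat) == s.+1 | (s : nat) == r.+1]
    | Some (_, s), None => (s : nat) == t
    | None, Some (_, r) => (r : nat) == t
    | None, None => false
    end.

Arguments mycielskian {V} e t _ _.

Definition twin (V : finType) (e : rel V) (x y : V) : bool :=
  [forall z, e x z == e y z].

Definition has_distinct_twins (V : finType) (e : rel V) : bool :=
  [exists x, exists y, (x != y) && twin e x y].

Definition twin_classes (V : finType) (e : rel V) : {set {set V}} :=
  [set [set y | twin e x y] | x : V].

Definition twin_vertex (V : finType) (e : rel V) : finType :=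
  {A : {set V} | A \in twin_classes e}.

Definition twin_quotient (V : finType) (e : rel V) : rel (twin_vertex e) :=
  fun A B => [exists x in val A, exists y in val B, e x y].

Arguments twin_quotient {V} e _ _.

Definition twin_cover (V : finType) (e : rel V) (T : {set V}) : bool :=
  [forall x, forall y, ((x != y) && twin e x y) ==> (x \in T) || (y \in T)].

Definition min_twin_cover (V : finType) (e : rel V) (T : {set V}) : Prop :=
  twin_cover e T /\ forall S : {set V}, twin_cover e S -> #|T| <= #|S|.

Definition has_isolated (V : finType) (e : rel V) : Prop :=
  exists v : V, forall u : V, ~~ e v u.

Definition thm_hyps (V : finType) (e : rel V) (T : {set V}) : Prop :=
  [/\ simple_graph e, has_isolated e, has_distinct_twins e & min_twin_cover e T].

(* Main.v *)
Require Import Defs.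
From mathcomp Require Import all_boot.
From mathcomp Require Import fingroup perm.
From mathcomp Require Import zify.
Set Implicit Arguments. Unset Strict Implicit. Unset Printing Implicit Defensive.

Section Gen.
Variables (V : finType) (r : rel V).

Lemma autP (p : {perm V}) : is_aut r p -> forall x y, r (p x) (p y) = r x y.
Proof. by move=> /forallP H x y; apply/eqP/(forallP (H x) y). Qed.

Lemma autV (p : {perm V}) : is_aut r p -> is_aut r p^-1.
Proof.
move=> H; apply/forallP=> x; apply/forallP=> y; apply/eqP.
by rewrite -(autP H) !permKV.
Qed.

Lemma bigmin_le (I : eqType) (s : seq I) (P : pred I) (F : I -> nat) d j :
  j \in s -> P j -> \big[minn/d]_(i <- s | P i) F i <= F j.
Proof.
elim: s => // a s IH; rewrite in_cons big_cons => /orP [/eqP <-|js] Pj.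
  by rewrite Pj geq_minl.
case: ifP => _; last exact: IH.
by rewrite geq_min IH ?orbT.
Qed.

Lemma det_le S : determining r S -> det r <= #|S|.
Proof. by move=> HS; rewrite /det; apply: bigmin_le => //; rewrite mem_index_enum. Qed.

Lemma setT_det : determining r setT.
Proof.
apply/forallP=> p; apply/implyP=> _; apply/implyP=> /forallP H.
by apply/eqP/permP=> x; rewrite perm1; apply/eqP/(implyP (H x) (in_setT x)).
Qed.

Lemma det_ex : exists S, determining r S /\ #|S| = det r.
Proof.
rewrite /det; apply: (big_rec (fun m => exists S, determining r S /\ #|S| = m)).
  by exists setT; split; [exact: setT_det | exact: cardsT].
move=> S m HS [S' [H1 H2]]; case: (leqP #|S| m) => h.
  by exists S; split => //; apply/esym/minn_idPl.
by exists S'; split => //; rewrite H2; apply/esym/minn_idPr/ltnW.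
Qed.

Lemma det_ge b : (forall S, determining r S -> b <= #|S|) -> b <= det r.
Proof. by move=> H; have [S [HS <-]] := det_ex; exact: H. Qed.

Lemma twinP x y : reflect (forall z, r x z = r y z) (twin r x y).
Proof. by apply: (iffP forallP) => H z; apply/eqP. Qed.

Lemma twin_refl x : twin r x x.
Proof. by apply/twinP. Qed.

Lemma twin_sym x y : twin r x y -> twin r y x.
Proof. by move=> /twinP H; apply/twinP=> z. Qed.

Lemma twin_trans x y z : twin r x y -> twin r y z -> twin r x z.
Proof. by move=> /twinP H1 /twinP H2; apply/twinP=> u; rewrite H1 H2. Qed.

Lemma tperm_aut x y : symmetric r -> twin r x y -> is_aut r (tperm x y).
Proof.
move=> sym /twinP H.
have H' : forall z, r z x = r z y by move=> z; rewrite sym H sym.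
apply/forallP=> a; apply/forallP=> b; apply/eqP.
by case: (tpermP x y a) => [->|->|_ _]; case: (tpermP x y b) => [->|->|_ _];
  rewrite ?H ?H'.
Qed.

Lemma det_twin S x y : symmetric r -> determining r S -> twin r x y -> x != y ->
  (x \in S) || (y \in S).
Proof.
move=> sym /forallP HS tw nxy; apply/negPn/negP => /norP [hx hy].
have := HS (tperm x y); rewrite tperm_aut //= => /implyP H.
have : [forall z in S, tperm x y z == z].
  apply/forallP=> z; apply/implyP=> zS; rewrite tpermD //.
    by apply: contraNneq hx => ->.
  by apply: contraNneq hy => ->.
move/H/eqP/permP/(_ x); rewrite tpermL perm1 => exy.
by rewrite exy eqxx in nxy.
Qed.

Lemma fix_trick (p : {perm V}) y z : p y = y -> p z = y -> z = y.
Proof. by move=> h1 h2; apply: (@perm_inj _ p); rewrite h1 h2. Qed.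

End Gen.

Section TQ.
Variables (V : finType) (e : rel V).
Hypothesis esym : symmetric e.
Variable d : V.

Definition rep (A : {set V}) := odflt d [pick x in A].

Lemma mem_rep (A : {set V}) x : x \in A -> rep A \in A.
Proof. by rewrite /rep; case: pickP => [y|/(_ x) /= ->]. Qed.

Definition cls x := [set y | twin e x y].

Lemma cls_in x : cls x \in twin_classes e.
Proof. by apply/imsetP; exists x. Qed.

Definition tv x : twin_vertex e := Sub (cls x) (cls_in x).

Lemma cls_eq x y : twin e x y -> cls x = cls y.
Proof.
move=> h; apply/setP => z; rewrite !inE; apply/idP/idP => h2.
  exact: twin_trans (twin_sym h) h2.
exact: twin_trans h h2.
Qed.

Lemma rep_cls x : twin e x (rep (cls x)).
Proof.
have : x \in cls x by rewrite inE twin_refl.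
by move=> /mem_rep; rewrite inE.
Qed.

Lemma classE (A : twin_vertex e) : val A = cls (rep (val A)).
Proof.
case: A => A /= /imsetP [x _ ->].
exact: cls_eq (rep_cls x).
Qed.

Lemma twin_e x x' y y' : twin e x x' -> twin e y y' -> e x y = e x' y'.
Proof. by move=> /twinP h1 /twinP h2; rewrite h1 esym h2 esym. Qed.

Lemma tq_rep A B : twin_quotient e A B = e (rep (val A)) (rep (val B)).
Proof.
apply/idP/idP.
  move=> /existsP [x /andP [xA /existsP [y /andP [yB exy]]]].
  have hx : twin e (rep (val A)) x by move: xA; rewrite {1}classE inE.
  have hy : twin e (rep (val B)) y by move: yB; rewrite {1}classE inE.
  by rewrite (twin_e hx hy).
move=> h; apply/existsP; exists (rep (val A)); apply/andP; split.
  by rewrite {2}classE inE twin_refl.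
apply/existsP; exists (rep (val B)); by rewrite {2}classE inE twin_refl h.
Qed.

Lemma twin_aut (p : {perm V}) x y : is_aut e p -> twin e (p x) (p y) = twin e x y.
Proof.
move=> hp; apply/twinP/twinP => h z.
  by rewrite -(autP hp) h (autP hp).
by rewrite -(permKV p z) !(autP hp) h.
Qed.

Lemma quot_fix (D : {set twin_vertex e}) (p : {perm V}) :
  is_aut e p -> determining (twin_quotient e) D ->
  (forall C, C \in D -> p (rep (val C)) = rep (val C)) ->
  forall x, twin e (p x) x.
Proof.
move=> hp HD hD.
pose f (A : twin_vertex e) := tv (p (rep (val A))).
have finj : injective f.
  move=> A B /(congr1 val) /= hAB; apply/val_inj.
  rewrite [val A]classE [val B]classE.
  have : p (rep (val B)) \in cls (p (rep (val A))) by rewrite hAB inE twin_refl.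
  by rewrite inE twin_aut // => /cls_eq.
pose g := perm finj.
have ga : is_aut (twin_quotient e) g.
  apply/forallP => A; apply/forallP => B; apply/eqP; rewrite !permE !tq_rep /=.
  by rewrite -(twin_e (rep_cls _) (rep_cls _)) (autP hp).
have g1 : g = 1%g.
  apply/eqP; move: HD => /forallP /(_ g); rewrite ga /=; move/implyP; apply.
  apply/forallP => C; apply/implyP => CD; rewrite permE; apply/eqP/val_inj => /=.
  by rewrite hD // -classE.
move=> x; have := congr1 (fun q : {perm twin_vertex e} => val (q (tv x))) g1; rewrite /= permE perm1 /= => h.
have hx : twin e x (rep (cls x)) := rep_cls x.
have : x \in cls (p (rep (cls x))) by rewrite h inE twin_refl.
rewrite inE => h2.
apply: (@twin_trans _ _ _ (p (rep (cls x)))) => //.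
by rewrite twin_aut.
Qed.

End TQ.

Section Myc.
Variables (V : finType) (e : rel V) (t : nat).
Hypothesis esymm : symmetric e.
Hypothesis t1 : 0 < t.

Local Notation W := (option (V * 'I_t.+1)).
Local Notation M := (mycielskian e t).

Lemma Msym : symmetric M.
Proof.
move=> [[i s]|] [[j r]|] //=; rewrite esymm; congr andb.
by rewrite andbC; case: (_ == _.+1); case: (_ == _.+1); rewrite ?orbT ?orbF.
Qed.

Lemma twin_lift x y s : twin e x y -> twin M (Some (x,s)) (Some (y,s)).
Proof. by move=> /twinP H; apply/twinP => [[[j r]|]] //=; rewrite H. Qed.

Definition iso := [set x | [forall u, ~~ e x u]].

Lemma isoP x : x \in iso -> forall u, e x u = false.
Proof. by rewrite inE => /forallP H u; apply/negbTE. Qed.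

Lemma iso_twin x y : x \in iso -> y \in iso -> twin e x y.
Proof. by move=> hx hy; apply/twinP => z; rewrite !isoP. Qed.

Lemma twin_iso x y : twin e x y -> x \in iso -> y \in iso.
Proof.
by move=> /twinP H; rewrite !inE => /forallP h; apply/forallP => u; rewrite -H.
Qed.

Lemma M_iso_nbr i (s : 'I_t.+1) z : i \in iso -> s < t -> M (Some (i,s)) z = false.
Proof.
move=> hi hs; case: z => [[j r]|] /=; first by rewrite isoP.
by rewrite ltn_eqF.
Qed.

Lemma M_iso_twin i j (s r : 'I_t.+1) : i \in iso -> j \in iso -> s < t -> r < t ->
  twin M (Some (i,s)) (Some (j,r)).
Proof. by move=> *; apply/twinP => z; rewrite !M_iso_nbr. Qed.

Lemma nbr_down j u (s : 'I_t.+1) : e j u -> M (Some (j,s)) (Some (u, inord s.-1)).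
Proof.
move=> h /=; rewrite h /= inordK; last by apply: leq_ltn_trans (leq_pred _) (ltn_ord s).
by case: (nat_of_ord s) => [|n] //=; rewrite eqxx !orbT.
Qed.

Lemma nbr_up j u (s : 'I_t.+1) : e j u -> s < t -> M (Some (j,s)) (Some (u, inord s.+1)).
Proof. by move=> h hs /=; rewrite h /= inordK // eqxx orbT. Qed.

Lemma M00 x y : M (Some (x, ord0)) (Some (y, ord0)) = e x y.
Proof. by rewrite /= andbT. Qed.


Section Lower.
Variable (T : {set V}).
Hypothesis Tmin : min_twin_cover e T.
Variable (i0 : V).
Hypothesis i0iso : i0 \in iso.
Variable (S : {set W}).
Hypothesis HS : determining M S.

Definition Sl (s : 'I_t.+1) := [set x | Some (x,s) \in S].

Lemma Sl_cover s : twin_cover e (Sl s).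
Proof.
apply/forallP=> x; apply/forallP=> y; apply/implyP=> /andP [nxy tw].
have := det_twin Msym HS (twin_lift s tw).
rewrite !inE; apply; by apply: contra nxy => /eqP [->].
Qed.

Lemma L1 s : #|T| <= #|Sl s :\: iso| + (#|iso| - 1).
Proof.
apply: (@leq_trans #|(Sl s :\: iso) :|: (iso :\ i0)|).
  apply: Tmin.2; apply/forallP=> x; apply/forallP=> y; apply/implyP=> /andP [nxy tw].
  case xi: (x \in iso).
    have yi := twin_iso tw xi.
    rewrite !(in_setU, in_setD, in_setD1, in_set1) xi yi /= !andbT.
    by case: (eqVneq x i0) => [ex|] //=; rewrite -ex eq_sym.
  have yi : y \in iso = false by apply/negbTE; apply: contraFN xi => /(twin_iso (twin_sym tw)).
  have := (forallP (forallP (Sl_cover s) x) y); rewrite nxy tw /= => /orP [h|h];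
   by rewrite !(in_setU, in_setD, in_setD1, in_set1) xi yi /= h ?orbT.
rewrite cardsU; apply: leq_trans (leq_subr _ _) _; rewrite leq_add2l.
by rewrite (cardsD1 i0 iso) i0iso add1n subn1.
Qed.

Lemma L2 : #|T| <= #|Sl ord_max|.
Proof. exact: Tmin.2 _ (Sl_cover _). Qed.

Local Notation wd := (widen_ord (m:=t.+1) (leqnSn t)).

Lemma L3 : \sum_(i < t) #|iso :\: Sl (wd i)| <= 1.
Proof.
case: (boolP [exists i : 'I_t, exists x, (x \in iso) && (x \notin Sl (wd i))]) =>
  [/existsP [i1 /existsP [x1 /andP [x1i x1n]]] | /existsPn H]; last first.
  rewrite big1 // => i _; apply/eqP; rewrite cards_eq0; apply/eqP/setP => x.
  rewrite in_setD in_set0; move: (H i) => /existsPn /(_ x).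
  by rewrite negb_and negbK orbC; case: (x \in Sl _); case: (x \in iso).
have claim : forall i x, x \in iso -> (i != i1) || (x != x1) -> x \in Sl (wd i).
  move=> i x xi neq.
  have := det_twin Msym HS (M_iso_twin (s:=wd i) (r:=wd i1) xi x1i (ltn_ord i) (ltn_ord i1)).
  move: x1n; rewrite !inE => /negbTE -> /=; rewrite orbF; apply.
  by apply: contraTneq neq => -[-> /val_inj ->]; rewrite !eqxx.
rewrite (bigD1 i1) //= big1 ?addn0.
  apply: (@leq_trans #|[set x1]|); last by rewrite cards1.
  apply: subset_leq_card; apply/subsetP => x; rewrite in_setD in_set1 => /andP [xn xi].
  by apply/negPn/negP => nx; move: (claim i1 x xi); rewrite nx eqxx /= (negbTE xn) => /(_ isT).
move=> i ni; apply/eqP; rewrite cards_eq0; apply/eqP/setP => x.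
rewrite in_setD in_set0; case xi: (x \in iso); rewrite ?andbF //= andbT.
by rewrite claim // ni.
Qed.

Lemma card_levels : \sum_(s : 'I_t.+1) #|Sl s| <= #|S|.
Proof.
pose P := [set p : V * 'I_t.+1 | Some p \in S].
have -> : \sum_(s : 'I_t.+1) #|Sl s| = #|P|.
  rewrite -sum1_card [in RHS]big_mkcond /=.
  rewrite [in RHS](eq_bigr (fun p => (fun x s => if (x,s) \in P then 1 else 0) p.1 p.2)); last by move=> [? ?].
  rewrite -(pair_bigA _ (fun x s => if (x,s) \in P then 1 else 0)) exchange_big /=.
  apply: eq_bigr => s _; rewrite -sum1_card big_mkcond /=.
  by apply: eq_bigr => x _; rewrite !inE.
rewrite -(card_imset _ (@Some_inj _)); apply: subset_leq_card.
by apply/subsetP => z /imsetP [p]; rewrite inE => pS ->.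
Qed.

Lemma lower_bound : t.+1 * #|T| + t - 1 <= #|S|.
Proof.
apply: leq_trans card_levels; rewrite big_ord_recr /=.
have hA : t * #|T| <= \sum_(i < t) #|Sl (wd i) :\: iso| + t * (#|iso| - 1).
  have : \sum_(i < t) #|T| <= \sum_(i < t) (#|Sl (wd i) :\: iso| + (#|iso| - 1)).
    by apply: leq_sum => i _; exact: L1.
  by rewrite big_split /= !sum_nat_const card_ord.
have hB : t * #|iso| <= \sum_(i < t) #|Sl (wd i) :&: iso| + 1.
  have : \sum_(i < t) (#|Sl (wd i) :&: iso| + #|iso :\: Sl (wd i)|) = t * #|iso|.
    rewrite -[in RHS](card_ord t) -sum_nat_const; apply: eq_bigr => i _.
    by rewrite setIC cardsID.
  rewrite big_split /= => <-; by rewrite leq_add2l L3.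
have hC := L2.
have hsum : \sum_(i < t) #|Sl (wd i)| =
    \sum_(i < t) #|Sl (wd i) :\: iso| + \sum_(i < t) #|Sl (wd i) :&: iso|.
  by rewrite -big_split /=; apply: eq_bigr => i _; rewrite addnC cardsID.
rewrite hsum.
have k1 : 0 < #|iso| by apply/card_gt0P; exists i0.
move: hA hB hC k1; set A := \sum_(i < t) _; set B := \sum_(i < t) _.
move: #|iso| #|T| #|Sl ord_max| => k n c; case: k => // k.
rewrite subn1 /= mulnS => hA hB hC _.
nia.
Qed.

End Lower.

Section Upper.
Variable (T : {set V}).
Hypothesis Tcov : twin_cover e T.
Variable (i0 : V).
Hypothesis i0iso : i0 \in iso.
Hypothesis i0T : i0 \notin T.
Variables (x1 x2 : V).
Hypothesis x12 : x1 != x2.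
Variable (D : {set twin_vertex e}).
Hypothesis HD : determining (twin_quotient e) D.

Let le2 : t.-1 <= t.+1 := leq_trans (leq_pred t) (leqnSn t).

Definition S1 : {set W} := [set Some p | p in setX T [set: 'I_t.+1]].
Definition S2 : {set W} := [set Some (i0, widen_ord le2 s) | s : 'I_t.-1].
Definition S3 : {set W} := [set Some (rep i0 (val C), ord0) | C in D].
Definition Sstar := S1 :|: S2 :|: S3.

Lemma card_Sstar : #|Sstar| <= t.+1 * #|T| + t.-1 + #|D|.
Proof.
rewrite /Sstar !cardsU; apply: leq_trans (leq_subr _ _) _.
apply: leq_add; last exact: leq_imset_card.
apply: leq_trans (leq_subr _ _) _.
apply: leq_add.
  rewrite card_imset; last exact: Some_inj.
  by rewrite cardsX cardsT card_ord mulnC.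
rewrite card_imset ?card_ord //.
by move=> a b [] /val_inj.
Qed.

Definition good (p : {perm W}) := is_aut M p /\ forall z, z \in Sstar -> p z = z.

Lemma good_inv p : good p -> good p^-1.
Proof.
move=> [ha hf]; split; first exact: autV.
by move=> z zS; rewrite -{1}(hf z zS) permK.
Qed.

Lemma fixT p x s : good p -> x \in T -> p (Some (x,s)) = Some (x,s).
Proof.
move=> [_ hf] xT; apply: hf; rewrite /Sstar !in_setU; apply/orP; left; apply/orP; left.
by apply/imsetP; exists (x,s); rewrite // in_setX xT in_setT.
Qed.

Lemma fixT2 p x y s : good p -> p (Some (x,s)) = Some (y,s) -> twin e x y -> y = x.
Proof.
move=> gp h tw; case: (eqVneq x y) => [//|nxy].
move: (forallP (forallP Tcov x) y); rewrite nxy tw /= => /orP [xT|yT].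
  by move: h; rewrite fixT // => -[].
have := fix_trick (fixT s gp yT) h; by case.
Qed.

Lemma fix_nontop p i (s : 'I_t.+1) : good p -> i \in iso -> (i != i0) || (s < t.-1) ->
  p (Some (i,s)) = Some (i,s).
Proof.
move=> gp ii; case: (eqVneq i i0) => [ei|ni] /= hs; last first.
  apply: fixT => //.
  move: (forallP (forallP Tcov i) i0); rewrite ni iso_twin //= (negbTE i0T) orbF.
  exact.
case: gp => _ hf; apply: hf; rewrite /Sstar !in_setU; apply/orP; left; apply/orP; right.
apply/imsetP; exists (Ordinal hs) => //; rewrite ei; congr (Some (_, _)); exact: val_inj.
Qed.

Lemma M_iso_char z : (forall y, M z y = false) ->
  exists j (r : 'I_t.+1), z = Some (j,r) /\ j \in iso /\ r < t.
Proof.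
case: z => [[j r]|] H; last by have := H (Some (i0, ord_max)); rewrite /= eqxx.
have hr : r < t.
  rewrite ltn_neqAle -ltnS ltn_ord andbT; apply/negP => /eqP h.
  by have := H None; rewrite /= h eqxx.
exists j, r; split => //; split => //.
rewrite inE; apply/forallP => u; apply/negP => eju.
by have := H (Some (u, inord r.-1)); rewrite nbr_down.
Qed.

Lemma fixiso p i (s : 'I_t.+1) : good p -> i \in iso -> s < t -> p (Some (i,s)) = Some (i,s).
Proof.
move=> gp ii hs.
case: (boolP ((i != i0) || (s < t.-1))) => [h|]; first exact: fix_nontop.
rewrite negb_or negbK -leqNgt => /andP [/eqP ei hs2].
have [j [r [hz [ji hr]]]] : exists j (r : 'I_t.+1), p (Some (i,s)) = Some (j,r) /\ j \in iso /\ r < t.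
  apply: M_iso_char => y; case: gp => ha _.
  by rewrite -{1}(permKV p y) (autP ha) M_iso_nbr.
case: (boolP ((j != i0) || (r < t.-1))) => [h|].
  by have e1 := fix_trick (fix_nontop gp ji h) hz; rewrite hz e1.
rewrite negb_or negbK -leqNgt => /andP [/eqP ej hr2].
have esr : s = r by apply/val_inj; move: hs hr hs2 hr2 => /=; lia.
by rewrite hz ej ei esr.
Qed.

Lemma uniq_none z a : (forall b, M z b = (b == a)) -> a = None.
Proof.
case: z => [[j s]|] H; last first.
  have h1 := H (Some (x1, ord_max)); have h2 := H (Some (x2, ord_max)).
  move: h1 h2; rewrite /= eqxx => /esym /eqP <- /esym /eqP [] e12.
  by move: x12; rewrite e12 eqxx.
case: (eqVneq (s : nat) t) => hs.
  by have := H None; rewrite /= hs eqxx => /esym /eqP <-.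
have hst : s < t by rewrite ltn_neqAle hs -ltnS ltn_ord.
case: (boolP (j \in iso)) => ji.
  by have := H a; rewrite eqxx M_iso_nbr.
move: ji; rewrite inE => /forallPn [u]; rewrite negbK => eju.
have h1 := H (Some (u, inord s.-1)); have h2 := H (Some (u, inord s.+1)).
rewrite nbr_down // in h1; rewrite nbr_up // in h2.
move: h1 h2 => /esym /eqP <- /esym /eqP [] /(f_equal (@nat_of_ord t.+1)).
rewrite !inordK //; last by apply: leq_ltn_trans (leq_pred _) (ltn_ord s).
by case: (nat_of_ord s) => [|n] //=; lia.
Qed.

Lemma fix_none p : good p -> p None = None.
Proof.
move=> [ha hf].
have hu : forall b, M (Some (i0, ord_max)) b = (b == None).
  by case=> [[j r]|] /=; [rewrite isoP | rewrite eqxx].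
apply: (@uniq_none (p (Some (i0, ord_max)))) => b.
rewrite -{1}(permKV p b) (autP ha) hu.
apply/eqP/eqP => [h|->]; last by rewrite permK.
by rewrite -h permKV.
Qed.

Lemma lev_pres d : forall p, good p -> forall x (s : 'I_t.+1), t - s <= d ->
  exists y, p (Some (x,s)) = Some (y,s).
Proof.
elim: d => [|d IH] p gp x s hd.
  have st : (s : nat) = t by move: (ltn_ord s) hd; lia.
  have := autP gp.1 (Some (x,s)) None; rewrite fix_none // /= st eqxx.
  case hz: (p (Some (x,s))) => [[y r]|] //= /eqP hr.
  by exists y; congr (Some (_,_)); apply/val_inj => /=; lia.
case: (leqP (t - s) d) => h; first exact: IH.
have hs : s < t by lia.
case: (boolP (x \in iso)) => xi; first by exists x; exact: fixiso.
move: xi; rewrite inE => /forallPn [u]; rewrite negbK => exu.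
have [u' hu'] : exists u', p (Some (u, inord s.+1)) = Some (u', inord s.+1).
  by apply: IH => //; rewrite inordK //; lia.
have := autP gp.1 (Some (x,s)) (Some (u, inord s.+1)); rewrite nbr_up // hu'.
case hz: (p (Some (x,s))) => [[y r]|] /=; last first.
  by have := fix_trick (fix_none gp) hz.
move=> /andP [_]; rewrite inordK //.
case/or3P => [/andP [_ h0] | /eqP h1 | /eqP h2] //.
  by exists y; congr (Some (_,_)); apply/val_inj => /=; lia.
have [y' hy'] : exists y', (p^-1)%g (Some (y, r)) = Some (y', r).
  by apply: IH; [exact: good_inv | lia].
by move: hy'; rewrite -hz permK => -[_] /(f_equal (@nat_of_ord t.+1)) /=; lia.
Qed.

Lemma level0 p : good p -> forall x, p (Some (x, ord0)) = Some (x, ord0).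
Proof.
move=> gp.
have lp : forall x, exists y, p (Some (x, ord0)) = Some (y, ord0).
  by move=> x; apply: (@lev_pres t) => //; rewrite subn0.
pose pf x := if p (Some (x, ord0)) is Some (y, _) then y else x.
have pfE : forall x, p (Some (x, ord0)) = Some (pf x, ord0).
  by move=> x; rewrite /pf; have [y ->] := lp x.
have pinj : injective pf.
  by move=> a b h; have := pfE a; rewrite h -pfE => /perm_inj [].
pose q := perm pinj.
have qa : is_aut e q.
  by apply/forallP=> a; apply/forallP=> b; apply/eqP; rewrite !permE -!M00 -!pfE (autP gp.1).
have hD : forall C, C \in D -> q (rep i0 (val C)) = rep i0 (val C).
  move=> C CD; rewrite permE.
  have : p (Some (rep i0 (val C), ord0)) = Some (rep i0 (val C), ord0).
    apply: gp.2; rewrite /Sstar !in_setU; apply/orP; right.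
    by apply/imsetP; exists C.
  by rewrite pfE => -[].
have tw := @quot_fix _ _ esymm i0 D q qa HD hD.
move=> x; rewrite pfE; congr (Some (_, _)).
apply: (fixT2 gp (pfE x)); apply: twin_sym; move: (tw x); by rewrite permE.
Qed.

Lemma all_fixed p : good p -> forall (s : 'I_t.+1) x, p (Some (x,s)) = Some (x,s).
Proof.
move=> gp; case=> n; elim: n => [|n IH] hn x.
  have -> : Ordinal hn = ord0 by apply/val_inj.
  exact: level0.
have [y hy] := @lev_pres t p gp x (Ordinal hn) (leq_subr _ _).
rewrite hy; congr (Some (_, _)); apply: (fixT2 gp hy).
apply/twinP => u.
have := autP gp.1 (Some (x, Ordinal hn)) (Some (u, Ordinal (ltnW hn))).
rewrite hy IH /= !eqxx !orbT !andbT => ->; done.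
Qed.

Lemma Sstar_det : determining M Sstar.
Proof.
apply/forallP=> p; apply/implyP=> ha; apply/implyP=> /forallP hf.
have gp : good p by split => // z zS; apply/eqP/(implyP (hf z) zS).
by apply/eqP/permP => [[[x s]|]]; rewrite perm1; [exact: all_fixed | exact: fix_none].
Qed.

Lemma upper_bound : det M <= t.+1 * #|T| + t.-1 + #|D|.
Proof. exact: leq_trans (det_le Sstar_det) card_Sstar. Qed.

End Upper.
End Myc.

Section Example.
Definition e0 : rel bool := fun _ _ => false.

Lemma e0_hyps : thm_hyps e0 [set true].
Proof.
split.
- by split.
- by exists true.
- apply/existsP; exists true; apply/existsP; exists false; apply/andP; split => //.
  by apply/twinP.
- split.
    apply/forallP => x; apply/forallP => y; apply/implyP => /andP [nxy _].
    by move: x y nxy; case; case; rewrite !inE.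
  move=> S HS; rewrite cards1.
  have := forallP (forallP HS true) false; rewrite /= => /implyP h.
  have : (true \in S) || (false \in S) by apply: h; apply/twinP.
  by case/orP => h2; apply/card_gt0P; eexists; exact: h2.
Qed.

Lemma e0_tv (A : twin_vertex e0) : val A = [set: bool].
Proof.
case: A => A /= /imsetP [x _ ->]; apply/setP => y; rewrite !inE.
by apply/twinP.
Qed.

Lemma e0_det : det (twin_quotient e0) = 0.
Proof.
apply/eqP; rewrite -leqn0; apply: (@leq_trans #|(set0 : {set twin_vertex e0})|); last by rewrite cards0.
apply: det_le; apply/forallP => p; apply/implyP => _; apply/implyP => _.
by apply/eqP/permP => A; rewrite perm1; apply/val_inj; rewrite !e0_tv.
Qed.

End Example.

Lemma part1 (V : finType) (e : rel V) (T : {set V}) (t : nat) :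
  thm_hyps e T -> 1 <= t ->
  (t.+1 * #|T| + t - 1 <= det (mycielskian e t)) /\
  (det (mycielskian e t) <= det (twin_quotient e) + (t.+1 * #|T| + t - 1)).
Proof.
move=> [[esym _] [v hv] /existsP [x1 /existsP [x2 /andP [x12 tw]]] Tmin] t1.
have vi : v \in iso e by rewrite inE; apply/forallP.
split.
  apply: det_ge => S HS. by have := lower_bound esym t1 Tmin vi HS.
have [i0 [i0i i0T]] : exists i0, i0 \in iso e /\ i0 \notin T.
  case: (boolP [exists i, (i \in iso e) && (i \notin T)]) =>
    [/existsP [i /andP [h1 h2]] | /existsPn H]; first by exists i.
  exfalso.
  have inT : forall y, y \in iso e -> y \in T by move=> y yi; move: (H y); rewrite yi /= negbK.
  have vT := inT v vi.
  have cov : twin_cover e (T :\ v).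
    apply/forallP=> x; apply/forallP=> y; apply/implyP=> /andP [nxy txy].
    move: (forallP (forallP Tmin.1 x) y); rewrite nxy txy /= => /orP [xT|yT];
      rewrite !in_setD1 ?xT ?yT /= ?andbT.
      case: (eqVneq x v) => [exv|] //=; subst x.
      rewrite eq_sym nxy /=; exact: (inT y (twin_iso txy vi)).
    case: (eqVneq y v) => [eyv|] //=; rewrite ?orbT //; subst y.
    rewrite nxy orbF; exact: (inT x (twin_iso (twin_sym txy) vi)).
  by have := Tmin.2 _ cov; rewrite (cardsD1 v T) vT add1n ltnn.
have [D [HD <-]] := det_ex (twin_quotient e).
have := upper_bound esym t1 Tmin.1 i0i i0T x12 HD.
move=> h; apply: leq_trans h _; lia.
Qed.

Theorem mainTheorem8 :
  (forall (V : finType) (e : rel V) (T : {set V}) (t : nat),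
     thm_hyps e T -> 1 <= t ->
     (t.+1 * #|T| + t - 1 <= det (mycielskian e t)) /\
     (det (mycielskian e t) <= det (twin_quotient e) + (t.+1 * #|T| + t - 1)))
  /\
  (forall t : nat, 1 <= t ->
     exists (V : finType) (e : rel V) (T : {set V}),
       thm_hyps e T /\ det (mycielskian e t) = t.+1 * #|T| + t - 1)
  /\
  (forall t : nat, 1 <= t ->
     exists (V : finType) (e : rel V) (T : {set V}),
       thm_hyps e T /\
       det (mycielskian e t) = det (twin_quotient e) + (t.+1 * #|T| + t - 1)).
Proof.
have ex : forall t, 1 <= t ->
    det (mycielskian e0 t) = det (twin_quotient e0) + (t.+1 * #|[set true]| + t - 1).
  move=> t t1; have [h1 h2] := part1 e0_hyps t1.
  by apply/eqP; rewrite eqn_leq h2 e0_det add0n h1.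
split; first exact: part1.
split => t t1; exists (bool : finType), e0, [set true]; split; try exact: e0_hyps.
  by rewrite ex // e0_det.
exact: ex.
Qed.
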